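(* Let $r\in\mathbb R\setminus\{0\}$, let $\varphi_0,\varphi_1,\varphi$ be positive non-degenerate quasi-concave functions on $(0,\infty)$, let $\{\widetilde t_i\}$ be a discretizing sequence for $\varphi(\varphi_0,\varphi_1)$, $\{\tau_k\}$ a discretizing sequence for $\varphi_0$ and $\{z_k\}$ a discretizing sequence for $\varphi_1$. Then there is a constant $C$ independent of $k$ such that for all $k\in\mathbb Z$ $$\sum_{i:\ \tau_k\le\widetilde t_i\le\tau_{k+1}}\Big(\frac{\varphi_1(\widetilde t_i)}{\varphi_0(\widetilde t_i)}\Big)^r\le C\sup_{i:\ \tau_k\le\widetilde t_i\le\tau_{k+1}}\Big(\frac{\varphi_1(\widetilde t_i)}{\varphi_0(\widetilde t_i)}\Big)^r,$$ $$\sum_{i:\ z_k\le\widetilde t_i\le z_{k+1}}\Big(\frac{\varphi_1(\widetilde t_i)}{\varphi_0(\widetilde t_i)}\Big)^r\le C\sup_{i:\ z_k\le\widetilde t_i\le z_{k+1}}\Big(\frac{\varphi_1(\widetilde t_i)}{\varphi_0(\widetilde t_i)}\Big)^r.$$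
   Context: A function $\psi:(0,\infty)\to(0,\infty)$ is non-degenerate quasi-concave if it is non-decreasing, $\psi(t)/t$ is non-increasing, and $\lim_{t\to0+}\psi(t)=\lim_{t\to\infty}\psi(t)/t=\lim_{t\to0+}t/\psi(t)=\lim_{t\to\infty}1/\psi(t)=0$. $\varphi(\varphi_0,\varphi_1)(t)=\varphi_0(t)\varphi(\varphi_1(t)/\varphi_0(t))$. A positive sequence is strongly increasing if $\inf_k a_{k+1}/a_k\ge2$, strongly decreasing if $\sup_k a_{k+1}/a_k\le1/2$. A strongly increasing $\{s_k\}_{k\in\mathbb Z}$ is a discretizing sequence for $\psi$ if $\{\psi(s_k)\}$ is strongly increasing, $\{\psi(s_k)/s_k\}$ is strongly decreasing, and $\mathbb Z=\mathbb Z_1\sqcup\mathbb Z_2$ with $\psi(s_{k+1})\le2\psi(s_k)$ for $k\in\mathbb Z_1$ and $\psi(s_k)/s_k\le2\psi(s_{k+1})/s_{k+1}$ for $k\in\mathbb Z_2$. *)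

(* Defs.v *)
From HB Require Import structures.
From mathcomp Require Import all_boot all_order all_algebra.
From mathcomp Require Import all_classical all_reals all_analysis.
Set Implicit Arguments. Unset Strict Implicit. Unset Printing Implicit Defensive.
Import Order.TTheory GRing.Theory Num.Theory.
Import numFieldNormedType.Exports.
Local Open Scope classical_set_scope.
Local Open Scope ring_scope.

(* psi : (0,oo) -> (0,oo), represented as R -> R, only its values on (0,oo) matter. *)
Definition nondeg_quasi_concave {R : realType} (psi : R -> R) : Prop :=
  [/\ (forall t, 0 < t -> 0 < psi t),
      (forall s t, 0 < s -> s <= t -> psi s <= psi t),
      (forall s t, 0 < s -> s <= t -> psi t / t <= psi s / s),
      psi t @[t --> 0^'+] --> 0 /\ psi t / t @[t --> +oo] --> 0
    & t / psi t @[t --> 0^'+] --> 0 /\ (psi t)^-1 @[t --> +oo] --> 0].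

(* phi(phi0,phi1)(t) = phi0(t) * phi(phi1(t)/phi0(t)) *)
Definition interp_fun {R : realType} (phi phi0 phi1 : R -> R) : R -> R :=
  fun t => phi0 t * phi (phi1 t / phi0 t).

Definition positive_seq {R : realType} (a : int -> R) : Prop :=
  forall k, 0 < a k.

Definition strongly_increasing {R : realType} (a : int -> R) : Prop :=
  positive_seq a /\ forall k : int, 2 <= a (k + 1) / a k.

Definition strongly_decreasing {R : realType} (a : int -> R) : Prop :=
  positive_seq a /\ forall k : int, a (k + 1) / a k <= 2^-1.

Definition discretizing_seq {R : realType} (psi : R -> R) (s : int -> R) : Prop :=
  [/\ strongly_increasing s,
      strongly_increasing (fun k => psi (s k)),
      strongly_decreasing (fun k => psi (s k) / s k)
    & exists Z1 Z2 : set int,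
        [/\ Z1 `&` Z2 = set0, Z1 `|` Z2 = setT,
            (forall k, Z1 k -> psi (s (k + 1)) <= 2 * psi (s k))
          & (forall k, Z2 k -> psi (s k) / s k <= 2 * (psi (s (k + 1)) / s (k + 1)))]].

(* Supremum of a family of nonnegative reals over an index set, in \bar R,
   with the usual convention that the supremum over the empty set is 0. *)
Definition sup_over {R : realType} (S : set int) (f : int -> R) : \bar R :=
  ereal_sup ([set 0%E] `|` [set (f i)%:E | i in S]).

(* Main.v *)
Require Import Defs.
From HB Require Import structures.
From mathcomp Require Import all_boot all_order all_algebra.
From mathcomp Require Import all_classical all_reals all_analysis.
From mathcomp Require Import zify ring lra.
Import Order.TTheory GRing.Theory Num.Theory.
Local Open Scope classical_set_scope.
Local Open Scope ring_scope.
Section Pure.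
Variable R : realType.

Lemma sum_uniq_le (F : nat -> R) : (forall n, 0 <= F n) ->
  forall M (s : seq nat), uniq s -> all (fun n => (n < M)%N) s ->
  \sum_(n <- s) F n <= \sum_(0 <= n < M) F n.
Proof.
move=> F0; elim=> [|M IH] s us.
  by case: s us => [|a s] //= _ /andP[].
move=> sM; rewrite big_nat_recr //=.
have [Ms|Mns] := boolP (M \in s).
  rewrite (big_rem M Ms) /= [F M + _]addrC lerD2r.
  apply: IH; first exact: rem_uniq.
  apply/allP => n nr; have nM := allP sM n (mem_rem nr).
  have nnM : n != M.
    apply/negP => /eqP En; subst n.
    by move: nr; rewrite (rem_filter _ us) mem_filter /= eqxx.
  by rewrite ltn_neqAle nnM -ltnS nM.
apply: le_trans (IH s us _) _; last by rewrite lerDl.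
apply/allP => n ns; have := allP sM n ns; rewrite ltnS leq_eqVlt => /orP[/eqP En|//].
by subst n; rewrite ns in Mns.
Qed.

Lemma geom_le (mu : R) M : 0 <= mu < 1 -> \sum_(0 <= n < M) mu ^+ n <= (1 - mu)^-1.
Proof.
move=> /andP[m0 m1].
have h : \sum_(0 <= n < M) mu ^+ n = (1 - mu ^+ M) / (1 - mu).
  have := subrX1 mu M; rewrite -(big_mkord xpredT (fun i => mu ^+ i)) => E.
  have nz : 1 - mu != 0 by rewrite subr_eq0 eq_sym lt_eqF.
  apply: (mulIf nz); rewrite divfK //.
  have -> : 1 - mu ^+ M = - (mu ^+ M - 1) by rewrite opprB.
  by rewrite E mulrC -mulNr opprB.
rewrite h ler_pdivrMr ?subr_gt0 // mulVf ?subr_eq0 1?eq_sym ?lt_eqF //.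
by rewrite lerBlDr lerDl exprn_ge0.
Qed.

Lemma exists_bound (s : seq nat) : exists M, all (fun n => (n < M)%N) s.
Proof.
elim: s => [|a s [M HM]]; first by exists 0%N.
exists (maxn a M).+1 => /=; rewrite ltnS leq_maxl /=.
by apply/allP => n /(allP HM) nM; rewrite ltnS (leq_trans (ltnW nM)) // leq_maxr.
Qed.

Lemma seq_bound (s : seq int) (d : int -> nat) (g : int -> R) (mu K : R) :
  uniq s -> {in s &, injective d} -> 0 <= mu < 1 -> 0 <= K ->
  (forall i, i \in s -> g i <= K * mu ^+ d i) ->
  \sum_(i <- s) g i <= K / (1 - mu).
Proof.
move=> us dinj mu01 K0 hg.
apply: le_trans (_ : \sum_(i <- s) K * mu ^+ d i <= _).
  by rewrite big_seq_cond [X in _ <= X]big_seq_cond; apply: ler_sum => i /andP[/hg].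
rewrite -mulr_sumr ler_wpM2l // -(big_map d xpredT (fun n => mu ^+ n)).
have [M HM] := exists_bound (map d s).
apply: (le_trans _ (geom_le mu M mu01)).
apply: sum_uniq_le HM.
  by move=> n; rewrite exprn_ge0 //; case/andP: mu01.
by rewrite map_inj_in_uniq.
Qed.

End Pure.

Section P2.
Variable R : realType.

Lemma m_le_mdiv (m mu : R) : 0 < mu <= 1 -> 0 <= m -> m <= m / mu.
Proof.
move=> /andP[m0 m1] mge.
by rewrite ler_pdivlMr // ler_piMr.
Qed.

Lemma up_bound (S : int -> Prop) (g : int -> R) (m mu : R) :
  0 < mu <= 1 -> 0 <= m -> (forall i, S i -> g i <= m) ->
  (forall i, S i -> S (i + 2) -> g i <= mu ^+ 2 * g (i + 2)) ->
  (forall i (n : nat), S i -> S (i + (n.+2)%:Z) -> S (i + 2)) ->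
  forall n i, S i -> S (i + n%:Z) -> g i <= m / mu * mu ^+ n.
Proof.
move=> mu01 m0 gm gstep conv.
have mu0 : 0 < mu by case/andP: mu01.
suff H : forall n, (forall i, S i -> S (i + n%:Z) -> g i <= m / mu * mu ^+ n) /\
   (forall i, S i -> S (i + n.+1%:Z) -> g i <= m / mu * mu ^+ n.+1).
  by move=> n; case: (H n).
elim=> [|n [IH1 IH2]]; split.
- move=> i Si _; rewrite expr0 mulr1; apply: le_trans (gm _ Si) _.
  exact: m_le_mdiv.
- move=> i Si _; rewrite expr1 divfK ?gt_eqF //; exact: gm.
- exact: IH2.
- move=> i Si Sin.
  have Si2 : S (i + 2) by apply: (conv i n).
  have Si2n : S (i + 2 + n%:Z).
    by have -> : i + 2 + n%:Z = i + (n.+2)%:Z by lia.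
  apply: le_trans (gstep _ Si Si2) _.
  have := IH1 _ Si2 Si2n => h.
  have -> : m / mu * mu ^+ n.+2 = mu ^+ 2 * (m / mu * mu ^+ n).
    by rewrite [RHS]mulrCA -exprD.
  by apply: ler_wpM2l => //; rewrite exprn_ge0 // ltW.
Qed.

Lemma down_bound (S : int -> Prop) (g : int -> R) (m mu : R) :
  0 < mu <= 1 -> 0 <= m -> (forall i, S i -> g i <= m) ->
  (forall i, S i -> S (i + 2) -> g (i + 2) <= mu ^+ 2 * g i) ->
  (forall i (n : nat), S i -> S (i + (n.+2)%:Z) -> S (i + n%:Z)) ->
  forall n i, S i -> S (i + n%:Z) -> g (i + n%:Z) <= m / mu * mu ^+ n.
Proof.
move=> mu01 m0 gm gstep conv.
have mu0 : 0 < mu by case/andP: mu01.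
suff H : forall n, (forall i, S i -> S (i + n%:Z) -> g (i + n%:Z) <= m / mu * mu ^+ n) /\
   (forall i, S i -> S (i + n.+1%:Z) -> g (i + n.+1%:Z) <= m / mu * mu ^+ n.+1).
  by move=> n; case: (H n).
elim=> [|n [IH1 IH2]]; split.
- move=> i Si Si0; rewrite expr0 mulr1; apply: le_trans (gm _ Si0) _.
  exact: m_le_mdiv.
- move=> i Si Si1; rewrite expr1 divfK ?gt_eqF //; exact: gm.
- exact: IH2.
- move=> i Si Sin.
  have Sin' : S (i + n%:Z) by apply: (conv i n).
  have E : i + (n.+2)%:Z = (i + n%:Z) + 2 by lia.
  have Sin2 : S (i + n%:Z + 2) by rewrite -E.
  rewrite E; apply: le_trans (gstep _ Sin' Sin2) _.
  have := IH1 _ Si Sin' => h.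
  have -> : m / mu * mu ^+ n.+2 = mu ^+ 2 * (m / mu * mu ^+ n).
    by rewrite [RHS]mulrCA -exprD.
  by apply: ler_wpM2l => //; rewrite exprn_ge0 // ltW.
Qed.

Lemma seq_max (s : seq int) : s != [::] -> exists2 N, N \in s & forall i, i \in s -> i <= N.
Proof.
elim: s => [//|a s IH] _.
case: s IH => [|b s] IH.
  by exists a; rewrite ?mem_seq1 // => i; rewrite mem_seq1 => /eqP ->.
have [N Ns HN] := IH isT.
have [aN|Na] := leP a N.
  exists N; first by rewrite in_cons Ns orbT.
  by move=> i; rewrite in_cons => /orP[/eqP ->|/HN].
exists a; first by rewrite in_cons eqxx.
by move=> i; rewrite in_cons => /orP[/eqP ->//|/HN iN]; apply: le_trans iN (ltW Na).
Qed.

Lemma seq_min (s : seq int) : s != [::] -> exists2 N, N \in s & forall i, i \in s -> N <= i.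
Proof.
elim: s => [//|a s IH] _.
case: s IH => [|b s] IH.
  by exists a; rewrite ?mem_seq1 // => i; rewrite mem_seq1 => /eqP ->.
have [N Ns HN] := IH isT.
have [Na|aN] := leP N a.
  exists N; first by rewrite in_cons Ns orbT.
  by move=> i; rewrite in_cons => /orP[/eqP ->|/HN].
exists a; first by rewrite in_cons eqxx.
by move=> i; rewrite in_cons => /orP[/eqP ->//|/HN iN]; apply: le_trans (ltW aN) iN.
Qed.


Lemma seq_geom (S : set int) (g : int -> R) (mu m : R) :
  0 < mu < 1 -> 0 <= m -> (forall i, S i -> g i <= m) ->
  (forall i (n : nat), S i -> S (i + (n.+2)%:Z) -> S (i + 2)) ->
  (forall i (n : nat), S i -> S (i + (n.+2)%:Z) -> S (i + n%:Z)) ->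
  ((forall i, S i -> S (i + 2) -> g i <= mu ^+ 2 * g (i + 2)) \/
   (forall i, S i -> S (i + 2) -> g (i + 2) <= mu ^+ 2 * g i)) ->
  forall s : seq int, uniq s -> (forall i, i \in s -> S i) ->
  \sum_(i <- s) g i <= mu^-1 / (1 - mu) * m.
Proof.
move=> /andP[mu0 mu1] m0 gm conv1 conv2 hdir s us sS.
have mu01 : 0 < mu <= 1 by rewrite mu0 ltW.
have mu01' : 0 <= mu < 1 by rewrite mu1 ltW.
have K0 : 0 <= m / mu by rewrite divr_ge0 // ltW.
have -> : mu^-1 / (1 - mu) * m = m / mu / (1 - mu).
  by rewrite [LHS]mulrC mulrA.
have [->|sn0] := eqVneq s [::].
  by rewrite big_nil divr_ge0 // subr_ge0 ltW.
case: hdir => [up|down].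
- have [N Ns HN] := @seq_max s sn0.
  apply: (@seq_bound R s (fun i => (absz (N - i)))) => //.
    move=> i j iS jS /= E.
    have := HN _ iS; have := HN _ jS => hj hi.
    have E' : ((absz (N - i)))%:Z = ((absz (N - j)))%:Z by rewrite E.
    lia.
  move=> i iS; apply: (up_bound S g m mu mu01 m0 gm up conv1 (absz (N - i)) i); first exact: sS.
  have -> : i + ((absz (N - i)))%:Z = N by have := HN _ iS; lia.
  exact: sS.
- have [N Ns HN] := @seq_min s sn0.
  apply: (@seq_bound R s (fun i => (absz (i - N)))) => //.
    move=> i j iS jS /= E.
    have := HN _ iS; have := HN _ jS => hj hi.
    have E' : ((absz (i - N)))%:Z = ((absz (j - N)))%:Z by rewrite E.
    lia.
  move=> i iS.
  have Ei : i = N + ((absz (i - N)))%:Z by have := HN _ iS; lia.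
  rewrite [in g i]Ei.
  apply: (down_bound S g m mu mu01 m0 gm down conv2 ((absz (i - N))) N); first exact: sS.
  by rewrite -Ei; exact: sS.
Qed.

Lemma esum_geom (S : set int) (g : int -> R) (mu : R) :
  0 < mu < 1 -> (forall i, S i -> 0 <= g i) ->
  (forall i (n : nat), S i -> S (i + (n.+2)%:Z) -> S (i + 2)) ->
  (forall i (n : nat), S i -> S (i + (n.+2)%:Z) -> S (i + n%:Z)) ->
  ((forall i, S i -> S (i + 2) -> g i <= mu ^+ 2 * g (i + 2)) \/
   (forall i, S i -> S (i + 2) -> g (i + 2) <= mu ^+ 2 * g i)) ->
  (\esum_(i in S) (g i)%:E <= (mu^-1 / (1 - mu))%:E * sup_over S g)%E.
Proof.
move=> mu01 g0 conv1 conv2 hdir.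
have /andP[mu0 mu1] := mu01.
have C0 : 0 < mu^-1 / (1 - mu) by rewrite divr_gt0 ?invr_gt0 // subr_gt0.
have M0 : (0 <= sup_over S g)%E by apply: ereal_sup_ubound; left.
have gM : forall i, S i -> ((g i)%:E <= sup_over S g)%E.
  by move=> i Si; apply: ereal_sup_ubound; right; exists i.
move: M0 gM; case: (sup_over S g) => [m| |] M0 gM.
- have gm : forall i, S i -> g i <= m by move=> i /gM; rewrite lee_fin.
  rewrite lee_fin in M0.
  apply: ge_ereal_sup => _ [X [finX XS]] <-.
  rewrite fsbig_finite //= sumEFin -EFinM lee_fin.
  apply: (seq_geom S g mu m mu01 M0 gm conv1 conv2 hdir).
  exact: finmap.fset_uniq.
  by move=> i; rewrite in_fset_set // inE => /XS.
- by rewrite mulry gtr0_sg // mul1e leey.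
- by [].
Qed.

End P2.

Section P3.
Variable R : realType.

Lemma derived1 (phi : R -> R) : nondeg_quasi_concave phi ->
  forall u v, 0 < u -> 0 < v -> 2 * phi v <= phi u -> 2 * v <= u.
Proof.
case=> pos mono qc _ _ u v u0 v0 h.
have pv := pos v v0; have pu := pos u u0.
have [uv|vu] := leP u v.
  have := mono u v u0 uv; nra.
have := qc v u v0 (ltW vu).
rewrite ler_pdivrMr // mulrAC ler_pdivlMr // => h2.
nra.
Qed.

Lemma derived2 (phi : R -> R) : nondeg_quasi_concave phi ->
  forall u v, 0 < u -> 0 < v -> 2 * (phi v / v) <= phi u / u -> 2 * u <= v.
Proof.
case=> pos mono qc _ _ u v u0 v0 h.
have pv := pos v v0; have pu := pos u u0.
have [vu|uv] := leP v u.
  have := qc v u v0 vu.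
  have : 0 < phi v / v by rewrite divr_gt0.
  lra.
have h3 := mono u v u0 (ltW uv).
move: h; rewrite mulrA ler_pdivrMr // mulrAC ler_pdivlMr // => h2.
nra.
Qed.


Lemma split_dir (A B Phi : R -> R) (s : int -> R) (k : int) :
  nondeg_quasi_concave A -> discretizing_seq A s ->
  (forall t, 0 < t -> Phi t = A t * B t) -> (forall t, 0 < t -> 0 < B t) ->
  (forall t t', s k <= t -> t <= t' -> t' <= s (k + 1) ->
     4 * Phi t <= Phi t' -> 4 * (Phi t' / t') <= Phi t / t -> 2 * B t <= B t') \/
  (forall t t', s k <= t -> t <= t' -> t' <= s (k + 1) ->
     4 * Phi t <= Phi t' -> 4 * (Phi t' / t') <= Phi t / t -> 2 * B t' <= B t).
Proof.
case=> pos mono qc _ _ [[spos _] _ _ [Z1 [Z2 [_ U h1 h2]]]] PhiE Bpos.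
have sk0 := spos k; have sk1 := spos (k + 1).
have : (Z1 `|` Z2) k by rewrite U.
case=> [Zk|Zk]; [left|right] => t t' st tt' ts H1 H2.
- have t0 : 0 < t by apply: (lt_le_trans sk0 st).
  have t'0 : 0 < t' by apply: (lt_le_trans t0 tt').
  have a1 := mono t' (s (k + 1)) t'0 ts.
  have a2 := h1 k Zk.
  have a3 := mono (s k) t sk0 st.
  have at0 := pos t t0; have bt := Bpos t t0; have bt' := Bpos t' t'0.
  move: H1; rewrite !PhiE // => H1.
  nra.
- have t0 : 0 < t by apply: (lt_le_trans sk0 st).
  have t'0 : 0 < t' by apply: (lt_le_trans t0 tt').
  have a1 := qc t' (s (k + 1)) t'0 ts.
  have a2 := h2 k Zk.
  have a3 := qc (s k) t sk0 st.
  have at0 := pos t' t'0; have bt := Bpos t t0; have bt' := Bpos t' t'0.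
  have al : 0 < A t' / t' by rewrite divr_gt0.
  move: H2; rewrite !PhiE // ![_ * B _ / _]mulrAC => H2.
  nra.
Qed.

Lemma four_inc (a : int -> R) : strongly_increasing a -> forall i, 4 * a i <= a (i + 2).
Proof.
case=> apos h i.
have e : i + 2 = i + 1 + 1 by rewrite -addrA.
have s1 := h i; have s2 := h (i + 1).
rewrite ler_pdivlMr // in s1; rewrite ler_pdivlMr // in s2.
rewrite e; lra.
Qed.

Lemma four_dec (a : int -> R) : strongly_decreasing a -> forall i, 4 * a (i + 2) <= a i.
Proof.
case=> apos h i.
have e : i + 2 = i + 1 + 1 by rewrite -addrA.
have s1 := h i; have s2 := h (i + 1).
rewrite ler_pdivrMr // in s1; rewrite ler_pdivrMr // in s2.
have := apos i; have := apos (i + 1).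
rewrite e; lra.
Qed.

Lemma mono_seq (a : int -> R) : strongly_increasing a -> forall i (n : nat), a i <= a (i + n%:Z).
Proof.
case=> apos h i; elim=> [|n IH]; first by rewrite addr0.
have e : i + n.+1%:Z = i + n%:Z + 1 by lia.
have := h (i + n%:Z); rewrite ler_pdivlMr // -e => h2.
have := apos (i + n%:Z); lra.
Qed.

End P3.

Section P4.
Variable R : realType.

Lemma pow_up (x y p : R) : 0 < p -> 0 < x -> 2 * x <= y -> 2 `^ p * x `^ p <= y `^ p.
Proof.
move=> p0 x0 h.
rewrite -powRM //; last exact: ltW.
apply: (ge0_ler_powR (ltW p0)) => //; rewrite nnegrE.
  by rewrite mulr_ge0 // ltW.
have : 0 <= 2 * x by rewrite mulr_ge0 // ltW.
move=> h2; exact: le_trans h2 h.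
Qed.

Lemma pow_down (x y p : R) : 0 < p -> 0 < x -> 2 * x <= y ->
  2 `^ p * y `^ (- p) <= x `^ (- p).
Proof.
move=> p0 x0 h.
have y0 : 0 < y.
  have h2 : 0 < 2 * x by rewrite mulr_gt0.
  lra.
have X0 : 0 < x `^ p by rewrite powR_gt0.
have Y0 : 0 < y `^ p by rewrite powR_gt0.
have L0 : 0 < 2 `^ p :> R by rewrite powR_gt0.
have := pow_up x y p p0 x0 h.
rewrite !powRN ler_pdivrMr //.
by rewrite ler_pdivlMl // mulrC.
Qed.

Lemma lam_step (lam a b : R) : 0 < lam -> lam * a <= b -> a <= lam^-1 * b.
Proof. by move=> l0 h; rewrite ler_pdivlMl. Qed.

Lemma part (r a b : R) (tt : int -> R) (f : R -> R) :
  r != 0 -> strongly_increasing tt -> (forall t, 0 < t -> 0 < f t) ->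
  ((forall i, a <= tt i <= b -> a <= tt (i + 2) <= b -> 2 * f (tt i) <= f (tt (i + 2))) \/
   (forall i, a <= tt i <= b -> a <= tt (i + 2) <= b -> 2 * f (tt (i + 2)) <= f (tt i))) ->
  (\esum_(i in [set i | (a <= tt i <= b)%R]) ((f (tt i)) `^ r)%R%:E <=
    ((Num.sqrt ((2 `^ `|r|)^-1))^-1 / (1 - Num.sqrt ((2 `^ `|r|)^-1)))%:E *
    sup_over [set i | (a <= tt i <= b)%R] (fun i => (f (tt i)) `^ r)%R)%E.
Proof.
move=> r0 tinc fpos hdir.
set lam := 2 `^ `|r|.
have ar0 : 0 < `|r| by rewrite normr_gt0.
have lam1 : 1 < lam.
  have := @gt0_ltr_powR R `|r| ar0 1 2; rewrite powR1 /=; apply; by rewrite ?nnegrE ?ler01 ?ltr1n...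
have lam0 : 0 < lam by lra.
set mu := Num.sqrt (lam^-1).
have mu2 : mu ^+ 2 = lam^-1 by rewrite sqr_sqrtr // invr_ge0 ltW.
have mu0 : 0 < mu by rewrite sqrtr_gt0 invr_gt0.
have mu1 : mu < 1.
  by rewrite -(@expr_lt1 _ 2) ?ltW // mu2 invf_lt1.
have tpos : forall i, 0 < tt i by case: tinc.
have tmono := @mono_seq R tt tinc.
have ttf : forall i, 0 < f (tt i) by move=> i; apply: fpos.
apply: esum_geom.
- by rewrite mu0 mu1.
- by move=> i _; rewrite powR_ge0.
- move=> i n /= /andP[ai ib] /andP[ai2 ib2]; apply/andP; split.
    by apply: le_trans ai (tmono i 2%N).
  apply: le_trans ib2; have := tmono (i + 2) n.
  by have -> : i + 2 + n%:Z = i + (n.+2)%:Z by lia.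
- move=> i n /= /andP[ai ib] /andP[ai2 ib2]; apply/andP; split.
    by apply: le_trans ai (tmono i n).
  apply: le_trans ib2; have := tmono (i + n%:Z) 2%N.
  by have -> : i + n%:Z + (2%N)%:Z = i + (n.+2)%:Z by lia.
have [rneg|rpos] : r < 0 \/ 0 < r.
  case: (ltgtP r 0) => [h|h|h]; [by left|by right|by move: r0; rewrite h eqxx].
- have er : r = - `|r| by rewrite ltr0_norm // opprK.
  case: hdir => hd; [right|left] => i Si Si2; rewrite mu2; apply: lam_step => //;
    rewrite er; apply: pow_down => //; exact: hd.
- have er : r = `|r| by rewrite gtr0_norm.
  case: hdir => hd; [left|right] => i Si Si2; rewrite mu2; apply: lam_step => //;
    rewrite er; apply: pow_up => //; exact: hd.
Qed.

End P4.

Theorem lemma3p7 (R : realType) (r : R) (phi0 phi1 phi : R -> R)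
    (tt tau z : int -> R) :
  r != 0 ->
  nondeg_quasi_concave phi0 -> nondeg_quasi_concave phi1 ->
  nondeg_quasi_concave phi ->
  discretizing_seq (interp_fun phi phi0 phi1) tt ->
  discretizing_seq phi0 tau ->
  discretizing_seq phi1 z ->
  exists C : R, forall k : int,
    ((\esum_(i in [set i | (tau k <= tt i <= tau (k + 1))%R])
        ((phi1 (tt i) / phi0 (tt i)) `^ r)%R%:E)
      <= C%:E * sup_over [set i | (tau k <= tt i <= tau (k + 1))%R]
                  (fun i => (phi1 (tt i) / phi0 (tt i)) `^ r)%R)%E /\
    ((\esum_(i in [set i | (z k <= tt i <= z (k + 1))%R])
        ((phi1 (tt i) / phi0 (tt i)) `^ r)%R%:E)
      <= C%:E * sup_over [set i | (z k <= tt i <= z (k + 1))%R]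
                  (fun i => (phi1 (tt i) / phi0 (tt i)) `^ r)%R)%E.
Proof.
move=> r0 q0 q1 q qtt qtau qz.
exists ((Num.sqrt ((2 `^ `|r|)^-1))^-1 / (1 - Num.sqrt ((2 `^ `|r|)^-1))).
move=> k.
case: qtt => tinc Pinc Pdec _.
have [p0pos _ _ _ _] := q0.
have [p1pos _ _ _ _] := q1.
have [ppos _ _ _ _] := q.
have fpos : forall t, 0 < t -> 0 < phi1 t / phi0 t.
  by move=> t t0; rewrite divr_gt0 // ?p0pos ?p1pos.
have step1 i := @four_inc R _ Pinc i.
have step2 i := @four_dec R _ Pdec i.
simpl in step1, step2.
have tt2 i : tt i <= tt (i + 2) := @mono_seq R tt tinc i 2%N.
have tpos : forall i, 0 < tt i by case: tinc.
split.
- apply: (@part R r _ _ tt (fun t => phi1 t / phi0 t) r0 tinc fpos).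
  have := @split_dir R phi0 (fun t => phi (phi1 t / phi0 t)) (interp_fun phi phi0 phi1) tau k q0 qtau
    (fun t _ => erefl) (fun t t0 => ppos _ (fpos t t0)).
  case=> h; [left|right] => i /andP[a1 b1] /andP[a2 b2].
  + apply: (@derived1 R phi q); [exact: fpos| exact: fpos|].
    exact: h (tt i) (tt (i + 2)) a1 (tt2 i) b2 (step1 i) (step2 i).
  + apply: (@derived1 R phi q); [exact: fpos| exact: fpos|].
    exact: h (tt i) (tt (i + 2)) a1 (tt2 i) b2 (step1 i) (step2 i).
- apply: (@part R r _ _ tt (fun t => phi1 t / phi0 t) r0 tinc fpos).
  have PhiE : forall t, 0 < t -> interp_fun phi phi0 phi1 t =
      phi1 t * (phi (phi1 t / phi0 t) / (phi1 t / phi0 t)).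
    move=> t t0; rewrite /interp_fun.
    have a0 := p0pos t t0; have a1 := p1pos t t0.
    field; by rewrite ?gt_eqF.
  have Bpos : forall t, 0 < t -> 0 < phi (phi1 t / phi0 t) / (phi1 t / phi0 t).
    by move=> t t0; rewrite divr_gt0 //; [apply: ppos; apply: fpos | apply: fpos].
  have := @split_dir R phi1 (fun t => phi (phi1 t / phi0 t) / (phi1 t / phi0 t))
    (interp_fun phi phi0 phi1) z k q1 qz PhiE Bpos.
  case=> h; [right|left] => i /andP[a1 b1] /andP[a2 b2].
  + apply: (@derived2 R phi q); [exact: fpos| exact: fpos|].
    exact: h (tt i) (tt (i + 2)) a1 (tt2 i) b2 (step1 i) (step2 i).
  + apply: (@derived2 R phi q); [exact: fpos| exact: fpos|].
    exact: h (tt i) (tt (i + 2)) a1 (tt2 i) b2 (step1 i) (step2 i).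
Qed.
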